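(* CBS-DL is complete and optimal: on every MAPF-DL instance, and for every choice of tie-breaking, of collisions selected for branching, and of paths returned by the low-level search, CBS-DL terminates and returns a solution whose number of unsuccessful agents is the minimum over all solutions of the instance.
   Context: MAPF-DL. An instance consists of a deadline $T_{\mathrm{end}}\in\mathbb{N}$, a finite undirected graph $G=(V,E)$, and $M$ agents $a_1,\dots,a_M$; agent $a_i$ has a start vertex $s_i$ and a goal vertex $g_i$, and the graph distance from $s_i$ to $g_i$ is at most $T_{\mathrm{end}}$. A path for $a_i$ is a map $l_i:\{0,\dots,T_{\mathrm{end}}\}\to V$ with $l_i(0)=s_i$, $l_i(T_{\mathrm{end}})=g_i$, and for each $t\ge1$ either $(l_i(t-1),l_i(t))\in E$ or $l_i(t-1)=l_i(t)$. A plan assigns a path to each agent of some subset (the successful agents); the others are unsuccessful and get no path. Two distinct successful agents $a_i,a_j$ have a vertex collision $(a_i,a_j,v,t)$ if $l_i(t)=l_j(t)=v$, and an edge collision $(a_i,a_j,u,v,t)$ if $u=l_i(t)=l_j(t+1)$ and $v=l_j(t)=l_i(t+1)$. A solution is a plan with no collisions; its cost is the number of unsuccessful agents. Constraints: a vertex constraint $(a_i,v,t)$ forbids $l_i(t)=v$; an edge constraint $(a_i,u,v,t)$ forbids $l_i(t)=u$ together with $l_i(t+1)=v$. A path for $a_i$ obeys a constraint set $C$ if it violates none of the constraints in $C$ concerning $a_i$. Algorithm CBS-DL. Low-level search: given agent $a_i$ and constraint set $C$, it returns some path for $a_i$ obeying $C$ if one exists, and otherwise returns ''no path''. The high level performs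 best-first search over a constraint tree (CT); each CT node $N$ has a constraint set $N.C$, a plan $N.\mathrm{plan}$, and cost $N.\mathrm{cost}$ = number of agents without a path in $N.\mathrm{plan}$. The root has $C=\emptyset$ and the plan containing a low-level path for every agent (cost $0$). OPEN initially contains the root. Repeat: remove from OPEN a node $N$ of minimum cost (ties arbitrary). If $N.\mathrm{plan}$ has no collision, return it. Otherwise pick some collision in $N.\mathrm{plan}$. For a vertex collision $(a_i,a_j,v,t)$ create two children: one with constraints $N.C\cup\{(a_i,v,t)\}$ and one with $N.C\cup\{(a_j,v,t)\}$; for an edge collision $(a_i,a_j,u,v,t)$ the children get $N.C\cup\{(a_i,u,v,t)\}$ and $N.C\cup\{(a_j,v,u,t)\}$, respectively. Each child copies $N.\mathrm{plan}$, and then the path of the agent named in its new constraint is replaced by the low-level search result for that agent under the child's constraint set (the agent's path is deleted if ''no path'' is returned); the child's cost is recomputed and the child is inserted into OPEN. *)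

(* Defs.v *)
From Stdlib Require List.
From Stdlib Require Export Relation_Operators.
From HB Require Import structures.
From mathcomp Require Import all_boot.

(* A path is represented as a function nat -> V; only its values on
   {0,...,T} are ever inspected. *)

Definition dist_le {V : finType} (E : rel V) (x y : V) (T : nat) : Prop :=
  exists p : seq V, [&& path E x p, last x p == y & size p <= T].

Definition is_path {V : finType} {M : nat} (E : rel V) (T : nat)
    (s g : 'I_M -> V) (i : 'I_M) (l : nat -> V) : Prop :=
  l 0 = s i /\ l T = g i /\
  forall t, t < T -> E (l t) (l t.+1) \/ l t = l t.+1.

Inductive constr (V : finType) (M : nat) :=
| VCon (i : 'I_M) (v : V) (t : nat)          (* forbids l_i(t) = v *)
| ECon (i : 'I_M) (u v : V) (t : nat).       (* forbids l_i(t)=u /\ l_i(t+1)=v *)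
Arguments VCon {V M}.
Arguments ECon {V M}.

Definition agent_of {V : finType} {M : nat} (c : constr V M) : 'I_M :=
  match c with VCon i _ _ => i | ECon i _ _ _ => i end.

(* path l of agent i violates constraint c (times outside {0..T} are
   outside the domain of a path, so they cannot be violated) *)
Definition violates {V : finType} {M : nat} (T : nat) (i : 'I_M)
    (l : nat -> V) (c : constr V M) : Prop :=
  match c with
  | VCon j v t => j = i /\ t <= T /\ l t = v
  | ECon j u v t => j = i /\ t < T /\ l t = u /\ l t.+1 = v
  end.

Definition obeys {V : finType} {M : nat} (T : nat) (i : 'I_M)
    (C : seq (constr V M)) (l : nat -> V) : Prop :=
  forall c, List.In c C -> ~ violates T i l c.

(* plans: successful agents get Some path, unsuccessful ones None *)
Definition plan (V : finType) (M : nat) := 'I_M -> option (nat -> V).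

Definition has_path {V : finType} (o : option (nat -> V)) : bool :=
  if o is Some _ then true else false.

Definition cost {V : finType} {M : nat} (p : plan V M) : nat :=
  #|[pred i : 'I_M | ~~ has_path (p i)]|.

Definition vertex_collision {V : finType} {M : nat} (T : nat) (p : plan V M)
    (i j : 'I_M) (v : V) (t : nat) : Prop :=
  i <> j /\ t <= T /\
  exists li lj, p i = Some li /\ p j = Some lj /\ li t = v /\ lj t = v.

Definition edge_collision {V : finType} {M : nat} (T : nat) (p : plan V M)
    (i j : 'I_M) (u v : V) (t : nat) : Prop :=
  i <> j /\ t < T /\
  exists li lj, p i = Some li /\ p j = Some lj /\
    li t = u /\ lj t.+1 = u /\ lj t = v /\ li t.+1 = v.

Definition collision_free {V : finType} {M : nat} (T : nat) (p : plan V M) : Prop :=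
  (forall i j v t, ~ vertex_collision T p i j v t) /\
  (forall i j u v t, ~ edge_collision T p i j u v t).

Definition is_plan {V : finType} {M : nat} (E : rel V) (T : nat)
    (s g : 'I_M -> V) (p : plan V M) : Prop :=
  forall i l, p i = Some l -> is_path E T s g i l.

Definition solution {V : finType} {M : nat} (E : rel V) (T : nat)
    (s g : 'I_M -> V) (p : plan V M) : Prop :=
  is_plan E T s g p /\ collision_free T p.

Definition optimal_solution {V : finType} {M : nat} (E : rel V) (T : nat)
    (s g : 'I_M -> V) (p : plan V M) : Prop :=
  solution E T s g p /\ forall q, solution E T s g q -> cost p <= cost q.

Definition lowlevel_result {V : finType} {M : nat} (E : rel V) (T : nat)
    (s g : 'I_M -> V) (i : 'I_M) (C : seq (constr V M))
    (r : option (nat -> V)) : Prop :=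
  match r with
  | Some l => is_path E T s g i l /\ obeys T i C l
  | None => ~ exists l, is_path E T s g i l /\ obeys T i C l
  end.

Record node (V : finType) (M : nat) := Node { nC : seq (constr V M); nplan : plan V M }.
Arguments Node {V M}.
Arguments nC {V M}.
Arguments nplan {V M}.

Definition ncost {V : finType} {M : nat} (N : node V M) : nat := cost (nplan N).

Definition update {V : finType} {M : nat} (p : plan V M) (i : 'I_M)
    (r : option (nat -> V)) : plan V M :=
  fun k => if k == i then r else p k.

Definition is_child {V : finType} {M : nat} (E : rel V) (T : nat)
    (s g : 'I_M -> V) (N : node V M) (c : constr V M) (N' : node V M) : Prop :=
  exists r, lowlevel_result E T s g (agent_of c) (c :: nC N) r /\
            N' = Node (c :: nC N) (update (nplan N) (agent_of c) r).

Inductive state (V : finType) (M : nat) :=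
| Running (open : seq (node V M))
| Done (p : plan V M).
Arguments Running {V M}.
Arguments Done {V M}.

(* one iteration of the high-level loop; every nondeterministic choice
   (tie-breaking, collision to branch on, low-level paths) is allowed.
   OPEN is a list; the extracted node N is any node of minimum cost. *)
Inductive step {V : finType} {M : nat} (E : rel V) (T : nat)
    (s g : 'I_M -> V) : state V M -> state V M -> Prop :=
| step_return o1 N o2 :
    all (fun N' => ncost N <= ncost N') (o1 ++ o2) ->
    collision_free T (nplan N) ->
    step E T s g (Running (o1 ++ N :: o2)) (Done (nplan N))
| step_vertex o1 N o2 i j v t N1 N2 :
    all (fun N' => ncost N <= ncost N') (o1 ++ o2) ->
    vertex_collision T (nplan N) i j v t ->
    is_child E T s g N (VCon i v t) N1 ->
    is_child E T s g N (VCon j v t) N2 ->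
    step E T s g (Running (o1 ++ N :: o2)) (Running (o1 ++ o2 ++ [:: N1; N2]))
| step_edge o1 N o2 i j u v t N1 N2 :
    all (fun N' => ncost N <= ncost N') (o1 ++ o2) ->
    edge_collision T (nplan N) i j u v t ->
    is_child E T s g N (ECon i u v t) N1 ->
    is_child E T s g N (ECon j v u t) N2 ->
    step E T s g (Running (o1 ++ N :: o2)) (Running (o1 ++ o2 ++ [:: N1; N2])).

(* Main.v *)
Require Import Defs.
From HB Require Import structures.
From mathcomp Require Import all_boot.
From Stdlib Require Import Classical Lia.
From mathcomp Require Import zify.

Set Implicit Arguments.
Unset Strict Implicit.

Section CBS.
Variables (V : finType) (E : rel V) (M T : nat) (s g : 'I_M -> V).

Definition bnd (c : constr V M) : bool :=
  match c with VCon _ _ t => t <= T | ECon _ _ _ t => t < T end.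

Definition ctype := (bool * 'I_M * V * V * 'I_T.+1)%type.

Definition code (c : constr V M) : ctype :=
  match c with
  | VCon i v t => (false, i, v, v, inord t)
  | ECon i u v t => (true, i, u, v, inord t)
  end.

Lemma code_inj c1 c2 : bnd c1 -> bnd c2 -> code c1 = code c2 -> c1 = c2.
Proof.
case: c1 => [i v t|i u v t]; case: c2 => [i' v' t'|i' u' v' t'] //= H1 H2 Heq;
  injection Heq; intros; subst; f_equal;
  move: (congr1 (@nat_of_ord _) H); rewrite !inordK //; lia.
Qed.

Definition NI (N : node V M) : Prop :=
  (forall k, lowlevel_result E T s g k (nC N) (nplan N k)) /\
  all bnd (nC N) /\ uniq (map code (nC N)).

Definition compat (q : plan V M) (N : node V M) : Prop :=
  forall k l, q k = Some l -> obeys T k (nC N) l.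

Lemma in_map_code c C : code c \in map code C ->
  exists c', List.In c' C /\ code c' = code c.
Proof.
elim: C => //= c0 C IH; rewrite inE; case/orP => [/eqP H|/IH [c' [H1 H2]]].
  by exists c0; split; auto.
by exists c'; split; auto.
Qed.

Lemma all_In (A : Type) (P : pred A) (C : seq A) c : all P C -> List.In c C -> P c.
Proof. elim: C => //= c0 C IH /andP [H1 H2] [<-|H] //; exact: IH. Qed.

Lemma viol_agent (k : 'I_M) (l : nat -> V) (c : constr V M) : violates T k l c -> agent_of c = k.
Proof. by case: c => [j v t|j u v t] /= [->]. Qed.

Lemma fresh N c l : NI N -> bnd c -> nplan N (agent_of c) = Some l ->
  violates T (agent_of c) l c -> code c \notin map code (nC N).
Proof.
move=> [HI [Hb Hu]] Hbc Hp Hv; apply/negP => /in_map_code [c' [Hin Hc]].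
have Hbc' := all_In Hb Hin. have Ec := code_inj Hbc' Hbc Hc. subst c'.
have := HI (agent_of c); rewrite Hp /= => -[_ Hob]. exact: (Hob c Hin Hv).
Qed.

Lemma child_NI N c N' l : NI N -> bnd c -> nplan N (agent_of c) = Some l ->
  violates T (agent_of c) l c -> is_child E T s g N c N' -> NI N'.
Proof.
move=> HN Hbc Hp Hv [r [Hr ->]]. have Hf := fresh HN Hbc Hp Hv.
case: HN => [HI [Hb Hu]]; split; [|split] => /=.
- move=> k; rewrite /update; case: eqP => [->//|Hk].
  have := HI k; case: (nplan N k) => [l'|] /=.
  + move=> [Hpa Hob]; split=> // c' [<-|Hin].
    * by move/viol_agent => Ha; apply: Hk.
    * exact: Hob.
  + move=> Hn [l' [Hpa Hob]]; apply: Hn; exists l'; split=> // c' Hin; apply: Hob; right; exact: Hin.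
- by apply/andP; split.
- by apply/andP; split.
Qed.

Lemma child_compat q N c N' : compat q N ->
  (forall l, q (agent_of c) = Some l -> ~ violates T (agent_of c) l c) ->
  is_child E T s g N c N' -> compat q N'.
Proof.
move=> Hc Hq [r [_ ->]] k l Hk c' /= [<-|Hin] Hv.
- have Ha := viol_agent Hv. subst k. exact: (Hq l Hk Hv).
- exact: (Hc k l Hk c' Hin Hv).
Qed.

Lemma compat_cost q N : NI N -> is_plan E T s g q -> compat q N -> ncost N <= cost q.
Proof.
move=> [HI _] Hq Hc; rewrite /ncost /cost; apply: subset_leq_card; apply/subsetP => k.
rewrite !inE.
have := HI k; case: (nplan N k) => [l|] //= Hn _.
case Eq: (q k) => [l|] //=; exfalso; apply: Hn; exists l; split; [exact: Hq | exact: Hc].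
Qed.

Definition Sinv (st : state V M) : Prop :=
  match st with
  | Running o => (forall N, List.In N o -> NI N) /\
      (forall q, solution E T s g q -> exists N, List.In N o /\ compat q N)
  | Done p => optimal_solution E T s g p
  end.

Lemma in_mid (A : Type) (o1 o2 : seq A) x : List.In x (o1 ++ x :: o2).
Proof. apply: List.in_or_app; right; left; done. Qed.

Lemma in_l (A : Type) (o1 o2 : seq A) x y : List.In y o1 -> List.In y (o1 ++ x :: o2).
Proof. by move=> H; apply: List.in_or_app; left. Qed.

Lemma in_r (A : Type) (o1 o2 : seq A) x y : List.In y o2 -> List.In y (o1 ++ x :: o2).
Proof. by move=> H; apply: List.in_or_app; right; right. Qed.

Lemma open_NI o1 N o2 N1 N2 :
  (forall N', List.In N' (o1 ++ N :: o2) -> NI N') -> NI N1 -> NI N2 ->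
  forall N', List.In N' (o1 ++ o2 ++ [:: N1; N2]) -> NI N'.
Proof.
move=> HN H1 H2 N' Hin; case: (List.in_app_or _ _ _ Hin) => [H|H'].
  by apply: HN; apply: in_l.
case: (List.in_app_or _ _ _ H') => [H|[<-|[<-|[]]]] //.
by apply: HN; apply: in_r.
Qed.

Lemma step_inv st st' : Sinv st -> step E T s g st st' -> Sinv st'.
Proof.
move=> Hs Hst; destruct Hst; move: Hs.
- rename H into Hall; rename H0 into Hcf; move=> [HN Hq].
  have HNN : NI N by apply: HN; apply: in_mid.
  split. split; [|exact: Hcf]. move=> k l Hk. have := (HNN.1 k); rewrite Hk; by case.
  move=> q Hsol. have [N' [Hin Hc]] := Hq q Hsol.
  have := compat_cost (HN _ Hin) Hsol.1 Hc.
  case: (List.in_app_or _ _ _ Hin) => [Hin1|[<-|Hin1]] //.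
  + move=> H; apply: leq_trans H; apply: (all_In (P := fun N' => ncost N <= ncost N') Hall).
    by apply: List.in_or_app; left.
  + move=> H; apply: leq_trans H; apply: (all_In (P := fun N' => ncost N <= ncost N') Hall).
    by apply: List.in_or_app; right.
- rename H into Hall; rename H0 into Hvc; rename H1 into Hc1; rename H2 into Hc2; move=> [HN Hq].
  have HNN : NI N by apply: HN; apply: in_mid.
  case: (Hvc) => [Hij [Ht [li [lj [Hi [Hj [Hli Hlj]]]]]]].
  have HN1 : NI N1.
    apply: (child_NI (c := VCon i v t) (l := li) HNN _ _ _ Hc1) => //=.
  have HN2 : NI N2.
    apply: (child_NI (c := VCon j v t) (l := lj) HNN _ _ _ Hc2) => //=.
  split; first exact: (open_NI HN HN1 HN2).
  move=> q Hsol; have [N' [Hin Hc]] := Hq q Hsol.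
  case: (List.in_app_or _ _ _ Hin) => [H|[EN|H]].
  + exists N'; split=> //; apply: List.in_or_app; left; done.
  + subst N'.
    case: (classic (exists li', q i = Some li' /\ li' t = v)) => [[li' [Hqi Hli']]|Hno].
    * exists N2; split.
        by apply: List.in_or_app; right; apply: List.in_or_app; right; right; left.
      apply: (child_compat Hc _ Hc2) => l /= Hl [_ [_ Hlt]].
      apply: (Hsol.2.1 i j v t); split=> //; split=> //; exists li', l; auto.
    * exists N1; split.
        by apply: List.in_or_app; right; apply: List.in_or_app; right; left.
      apply: (child_compat Hc _ Hc1) => l /= Hl [_ [_ Hlt]].
      by apply: Hno; exists l.
  + exists N'; split=> //; apply: List.in_or_app; right; apply: List.in_or_app; left; done.
- rename H into Hall; rename H0 into Hec; rename H1 into Hc1; rename H2 into Hc2; move=> [HN Hq].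
  have HNN : NI N by apply: HN; apply: in_mid.
  case: (Hec) => [Hij [Ht [li [lj [Hi [Hj [Hli1 [Hlj1 [Hlj Hli]]]]]]]]].
  have HN1 : NI N1.
    apply: (child_NI (c := ECon i u v t) (l := li) HNN _ _ _ Hc1) => //=.
  have HN2 : NI N2.
    apply: (child_NI (c := ECon j v u t) (l := lj) HNN _ _ _ Hc2) => //=.
  split; first exact: (open_NI HN HN1 HN2).
  move=> q Hsol; have [N' [Hin Hc]] := Hq q Hsol.
  case: (List.in_app_or _ _ _ Hin) => [H|[EN|H]].
  + exists N'; split=> //; apply: List.in_or_app; left; done.
  + subst N'.
    case: (classic (exists li', q i = Some li' /\ li' t = u /\ li' t.+1 = v))
      => [[li' [Hqi [Hli1' Hli']]]|Hno].
    * exists N2; split.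
        by apply: List.in_or_app; right; apply: List.in_or_app; right; right; left.
      apply: (child_compat Hc _ Hc2) => l /= Hl [_ [_ [Hl1 Hl2]]].
      apply: (Hsol.2.2 i j u v t); split=> //; split=> //; exists li', l; auto 10.
    * exists N1; split.
        by apply: List.in_or_app; right; apply: List.in_or_app; right; left.
      apply: (child_compat Hc _ Hc1) => l /= Hl [_ [_ [Hl1 Hl2]]].
      by apply: Hno; exists l.
  + exists N'; split=> //; apply: List.in_or_app; right; apply: List.in_or_app; left; done.
Qed.

Definition K := #|{: ctype}|.
Definition w (N : node V M) := 3 ^ (K - size (nC N)).
Definition meas (st : state V M) : nat :=
  match st with Running o => sumn (map w o) | Done _ => 0 end.

Lemma size_le N : NI N -> size (nC N) <= K.
Proof.
move=> [_ [_ Hu]]; rewrite -(size_map code) -(card_uniqP Hu); exact: max_card.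
Qed.

Lemma child_size N c N' : is_child E T s g N c N' -> size (nC N') = (size (nC N)).+1.
Proof. by move=> [r [_ ->]]. Qed.

Lemma w_child N N1 N2 c1 c2 : NI N1 -> is_child E T s g N c1 N1 ->
  is_child E T s g N c2 N2 -> w N1 + w N2 < w N.
Proof.
move=> H1 Hc1 Hc2; have Hs := size_le H1.
rewrite /w (child_size Hc1) (child_size Hc2) in Hs *.
have -> : K - size (nC N) = (K - (size (nC N)).+1).+1 by lia.
rewrite expnS; have := expn_gt0 3 (K - (size (nC N)).+1); lia.
Qed.

Lemma step_dec st st' : Sinv st -> step E T s g st st' -> meas st' < meas st.
Proof.
move=> Hs Hst; destruct Hst => /=; rewrite ?map_cat ?sumn_cat /=.
- have := expn_gt0 3 (K - size (nC N)); rewrite /w; lia.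
- case: Hs => HN _; have HNN : NI N by apply: HN; apply: in_mid.
  case: (H0) => [Hij [Ht [li [lj [Hi [Hj [Hli Hlj]]]]]]].
  have HN1 : NI N1 by apply: (child_NI (c := VCon i v t) (l := li) HNN _ _ _ H1) => //=.
  have := w_child HN1 H1 H2; lia.
- case: Hs => HN _; have HNN : NI N by apply: HN; apply: in_mid.
  case: (H0) => [Hij [Ht [li [lj [Hi [Hj [Hli1 [Hlj1 [Hlj Hli]]]]]]]]].
  have HN1 : NI N1 by apply: (child_NI (c := ECon i u v t) (l := li) HNN _ _ _ H1) => //=.
  have := w_child HN1 H1 H2; lia.
Qed.

Lemma exists_min (o : seq (node V M)) : o <> [::] ->
  exists o1 N o2, o = o1 ++ N :: o2 /\ all (fun N' => ncost N <= ncost N') (o1 ++ o2).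
Proof.
elim: o => // x o IH _; case: o IH => [|y o] IH.
  by exists [::], x, [::].
have [o1 [N [o2 [Eo Ha]]]] := IH (fun H => ltac:(discriminate)).
case: (leqP (ncost x) (ncost N)) => Hx.
- exists [::], x, (y :: o); split; first reflexivity.
  rewrite cat0s Eo all_cat; rewrite all_cat in Ha; case/andP: Ha => H1 H2.
  apply/andP; split; [|apply/andP; split].
  + by apply: sub_all H1 => z Hz; exact: leq_trans Hx Hz.
  + exact: Hx.
  + by apply: sub_all H2 => z Hz; exact: leq_trans Hx Hz.
- exists (x :: o1), N, o2; rewrite Eo; split; first reflexivity.
  apply/andP; split; [exact: ltnW|exact: Ha].
Qed.

Lemma stuck_done st : Sinv st -> (forall st', ~ step E T s g st st') ->
  exists p, st = Done p /\ optimal_solution E T s g p.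
Proof.
case: st => [o|p] /=; last by move=> H _; exists p.
move=> [HN Hq] Hstk; exfalso.
have Hsol0 : solution E T s g (fun _ => None).
  split; first by move=> k l.
  split; first by move=> i j v t [_ [_ [li [lj [H _]]]]].
  by move=> i j u v t [_ [_ [li [lj [H _]]]]].
have [N0 [Hin0 _]] := Hq _ Hsol0.
have Hne : o <> [::] by move=> Eo; rewrite Eo in Hin0.
have [o1 [N [o2 [Eo Ha]]]] := exists_min Hne. subst o.
have lowex : forall k C, exists r, lowlevel_result E T s g k C r.
  move=> k C; case: (classic (exists l, is_path E T s g k l /\ obeys T k C l)) => [[l Hl]|Hn].
    by exists (Some l).
  by exists None.
case: (classic (collision_free T (nplan N))) => [Hcf|Hncf].
  by apply: (Hstk (Done (nplan N))); apply: step_return.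
apply: Hncf; split.
- move=> i j v t Hvc.
  have [r1 Hr1] := lowex i (VCon i v t :: nC N).
  have [r2 Hr2] := lowex j (VCon j v t :: nC N).
  eapply Hstk; eapply step_vertex; [exact: Ha|exact: Hvc| |].
  + by exists r1; split; [exact: Hr1|reflexivity].
  + by exists r2; split; [exact: Hr2|reflexivity].
- move=> i j u v t Hec.
  have [r1 Hr1] := lowex i (ECon i u v t :: nC N).
  have [r2 Hr2] := lowex j (ECon j v u t :: nC N).
  eapply Hstk; eapply step_edge; [exact: Ha|exact: Hec| |].
  + by exists r1; split; [exact: Hr1|reflexivity].
  + by exists r2; split; [exact: Hr2|reflexivity].
Qed.

End CBS.

Theorem theorem2 (V : finType) (E : rel V) (M T : nat) (s g : 'I_M -> V)
  (Esym : symmetric E) (Eirr : irreflexive E)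
  (Hdist : forall i : 'I_M, dist_le E (s i) (g i) T)
  (root : plan V M)
  (Hroot : forall i : 'I_M, lowlevel_result E T s g i [::] (root i)) :
  (* termination: no infinite run of the high level, whatever the choices *)
  Acc (fun y x => step E T s g x y) (Running [:: Node [::] root]) /\
  (* every run ends by returning an optimal solution *)
  (forall st, clos_refl_trans _ (step E T s g) (Running [:: Node [::] root]) st ->
     (forall st', ~ step E T s g st st') ->
     exists p, st = Done p /\ optimal_solution E T s g p).
Proof.
have Hr : Sinv E T s g (Running [:: Node [::] root]).
  split.
    by move=> N [<-|[]]; split.
  move=> q _; exists (Node [::] root); split; first by left.
  by move=> k l _ c [].
split.
- have H : forall n st, Sinv E T s g st -> meas T st < n -> Acc (fun y x => step E T s g x y) st.
    elim=> [|n IH] st Hs Hm; first by rewrite ltn0 in Hm.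
    constructor => st' Hst; apply: IH; first exact: (step_inv Hs Hst).
    have := step_dec Hs Hst; lia.
  exact: (H (meas T (Running [:: Node [::] root])).+1).
- move=> st Hrt Hstk; apply: (stuck_done _ Hstk).
  have Hpres : forall x y, clos_refl_trans _ (step E T s g) x y -> Sinv E T s g x -> Sinv E T s g y.
    move=> x y; elim=> [a b Hab|a|a b c _ IH1 _ IH2] Ha; [exact: (step_inv Ha Hab)|done|].
    exact: IH2 (IH1 Ha).
  exact: Hpres Hrt Hr.
Qed.
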